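(* Let $IS\in\{\Box,\blacksquare\}^2$. There is no correct compositional translation from $\mathrm{SYNCSIMPLE}$ into $\mathrm{LOCKSIMPLE}_{2,IS}$ of blocking type $(P_1P_1,P_2)$.
   Context: $\mathrm{SYNCSIMPLE}$: subprocesses $\mathcal{U} ::= \checkmark \mid 0 \mid\, !\mathcal{U} \mid\, ?\mathcal{U}$; processes are finite parallel compositions ($\mid$ associative, commutative, $0$ a unit). Reduction: $!\mathcal{U}_1\mid ?\mathcal{U}_2\mid \mathcal{P}\to \mathcal{U}_1\mid\mathcal{U}_2\mid\mathcal{P}$. Successful: of form $\checkmark\mid\mathcal{P}$; may-convergent: reduces to a successful process; must-convergent: every reachable process is may-convergent. $\mathrm{LOCKSIMPLE}_{k,IS}$ ($IS\in\{\Box,\blacksquare\}^k$, $\Box$ empty, $\blacksquare$ full): subprocesses are words over $\{P_1,T_1,\dots,P_k,T_k\}$ followed by $0$ or $\checkmark$; states $(\mathcal{P},C)$ reduce by $(P_i\mathcal{U}\mid\mathcal{P},C)\to(\mathcal{U}\mid\mathcal{P},C[C_i:=\blacksquare])$ only if $C_i=\Box$, and $(T_i\mathcal{U}\mid\mathcal{P},C)\to(\mathcal{U}\mid\mathcal{P},C[C_i:=\Box])$ always. Success = process contains $\checkmark$; a process $\mathcal{P}$ is may/must-convergent iff the state $(\mathcal{P},IS)$ is. A compositional translation $\tau$ is given by words $\tau(!),\tau(?)$ with $\tau(0)=0$, $\tau(\checkmark)=\checkmark$, $\tau(!\mathcal{U})=\tau(!)\tau(\mathcal{U})$, $\tau(?\mathcal{U})=\tau(?)\tau(\mathcal{U})$,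 $\tau$ commuting with $\mid$; correct = preserves and reflects may- and must-convergence. Blocking type: for a word $S$, run $S$ as a single subprocess from $IS$; if it gets stuck at an occurrence of $P_i$, that occurrence ends the blocking prefix; if it is the first symbol from $\{P_i,T_i\}$ in $S$ the blocking type is $P_i$, otherwise the blocking prefix has form $R_1P_iR_2P_i$ with $R_2$ containing no $P_i,T_i$ and the blocking type is $P_iP_i$. $\tau$ has blocking type $(W_1,W_2)$ if $\tau(!)$ has type $W_1$ and $\tau(?)$ type $W_2$. *)

(* Defs.v *)
From Stdlib Require Import Permutation Relations List.
Import ListNotations.
From mathcomp Require Import all_boot.
Set Implicit Arguments. Unset Strict Implicit. Unset Printing Implicit Defensive.

Inductive SU : Type := SCheck | SZero | SSend of SU | SRecv of SU.

(* processes: finite parallel compositions, represented as lists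
   considered up to permutation (| associative, commutative). *)
Definition sproc := list SU.

Definition sstep (P Q : sproc) : Prop :=
  exists U1 U2 R, Permutation P (SSend U1 :: SRecv U2 :: R) /\
                  Permutation Q (U1 :: U2 :: R).

Definition ssuccessful (P : sproc) : Prop := In SCheck P.
Definition sreach := clos_refl_trans sproc sstep.
Definition smay (P : sproc) : Prop := exists Q, sreach P Q /\ ssuccessful Q.
Definition smust (P : sproc) : Prop := forall Q, sreach P Q -> smay Q.

(* LP i = P_{i+1}, LT i = T_{i+1}; indices are 'I_k *)
Inductive lsym (k : nat) : Type := LP of 'I_k | LT of 'I_k.
Definition lword k := list (lsym k).
(* a subprocess: a word followed by 0 (false) or checkmark (true) *)
Definition lsub k := (lword k * bool)%type.
Definition lproc k := list (lsub k).
(* lock contents: true = full (blacksquare), false = empty (box) *)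
Definition lconf k := {ffun 'I_k -> bool}.
Definition lupd k (C : lconf k) (i : 'I_k) (b : bool) : lconf k :=
  [ffun j => if j == i then b else C j].
Definition lstate k := (lproc k * lconf k)%type.

Definition lstep k (s s' : lstate k) : Prop :=
  (exists i w e R, Permutation s.1 ((LP i :: w, e) :: R) /\ s.2 i = false /\
      Permutation s'.1 ((w, e) :: R) /\ s'.2 = lupd s.2 i true)
  \/
  (exists i w e R, Permutation s.1 ((LT i :: w, e) :: R) /\
      Permutation s'.1 ((w, e) :: R) /\ s'.2 = lupd s.2 i false).

Definition lsuccessful k (s : lstate k) : Prop := In ([::], true) s.1.
Definition lreach k := clos_refl_trans (lstate k) (@lstep k).
Definition lmay k (s : lstate k) : Prop :=
  exists s', lreach s s' /\ lsuccessful s'.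
Definition lmust k (s : lstate k) : Prop :=
  forall s', lreach s s' -> lmay s'.

Fixpoint tr k (ws wr : lword k) (U : SU) : lsub k :=
  match U with
  | SCheck => ([::], true)
  | SZero => ([::], false)
  | SSend U' => let t := tr ws wr U' in (ws ++ t.1, t.2)
  | SRecv U' => let t := tr ws wr U' in (wr ++ t.1, t.2)
  end.
Definition trproc k (ws wr : lword k) (P : sproc) : lproc k := map (tr ws wr) P.

(* tau(!) = ws, tau(?) = wr; correct = preserves and reflects may and must *)
Definition correct_translation k (IS : lconf k) (ws wr : lword k) : Prop :=
  forall P : sproc,
    (smay P <-> lmay (trproc ws wr P, IS)) /\
    (smust P <-> lmust (trproc ws wr P, IS)).

(* sequential run of a word as a single subprocess; None = gets stuck *)
Fixpoint lrun k (C : lconf k) (w : lword k) : option (lconf k) :=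
  match w with
  | [::] => Some C
  | LP i :: w' => if C i then None else lrun (lupd C i true) w'
  | LT i :: w' => lrun (lupd C i false) w'
  end.

Definition mentions k (i : 'I_k) (w : lword k) : Prop :=
  In (LP i) w \/ In (LT i) w.

Inductive btype (k : nat) : Type := BP of 'I_k | BPP of 'I_k.

(* blocking prefix ends at a stuck occurrence of P_i: the run of the part
   before it does not get stuck and reaches a configuration with C_i full. *)
Definition has_btype k (IS : lconf k) (S : lword k) (b : btype k) : Prop :=
  match b with
  | BP i => exists R post C, S = R ++ LP i :: post /\ ~ mentions i R /\
              lrun IS R = Some C /\ C i = true
  | BPP i => exists R1 R2 post C,
              S = R1 ++ LP i :: R2 ++ LP i :: post /\ ~ mentions i R2 /\
              lrun IS (R1 ++ LP i :: R2) = Some C /\ C i = true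
  end.

Definition trans_btype k (IS : lconf k) (ws wr : lword k) (b1 b2 : btype k) :=
  has_btype IS ws b1 /\ has_btype IS wr b2.

(* Main.v *)
Require Import Defs.
From Stdlib Require Import Permutation Relations List.
From mathcomp Require Import all_boot.

Set Implicit Arguments. Unset Strict Implicit. Unset Printing Implicit Defensive.

Definition Ptrans := @Permutation_trans.
Definition Pswap := Stdlib.Sorting.Permutation.perm_swap.
Definition Pskip := Stdlib.Sorting.Permutation.perm_skip.
Arguments Ptrans {A l l' l''}.
Arguments Pswap {A x y l}.
Arguments Pskip {A x l l'}.

Definition l0 : 'I_2 := @ord0 1.
Definition l1 : 'I_2 := @ord_max 1.

Lemma I2_cases (i : 'I_2) : i = l0 \/ i = l1.
Proof.
case: i => [[|[|n]]] Hi.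
- by left; apply: val_inj.
- by right; apply: val_inj.
- by [].
Qed.

Lemma lrun_nomention k (C D : lconf k) i w :
  lrun C w = Some D -> ~ mentions i w -> D i = C i.
Proof.
elim: w C => [|a w IH] C /=; first by move=> [->].
case: a => j.
- case Cj: (C j) => // H Hm.
  rewrite (IH _ H); last by move=> [Hx|Hx]; apply: Hm; [left|right]; right.
  rewrite /lupd ffunE; case: eqP => // Eij; subst.
  by exfalso; apply: Hm; left; left.
- move=> H Hm.
  rewrite (IH _ H); last by move=> [Hx|Hx]; apply: Hm; [left|right]; right.
  rewrite /lupd ffunE; case: eqP => // Eij; subst.
  by exfalso; apply: Hm; right; left.
Qed.

Lemma lrun_cat k (C : lconf k) u v :
  lrun C (u ++ v) = obind (fun D => lrun D v) (lrun C u).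
Proof.
elim: u C => [|a u IH] C //=.
case: a => j //=; by case: (C j).
Qed.

Lemma lrun_mono k (C C' D : lconf k) w :
  lrun C w = Some D -> (forall i, C' i -> C i) -> exists D', lrun C' w = Some D'.
Proof.
elim: w C C' D => [|a w IH] C C' D /=; first by move=> _ _; eauto.
case: a => j.
- case Cj: (C j) => // H Hle.
  have -> : C' j = false by case C'j: (C' j) => //; move: (Hle j); rewrite C'j Cj => /(_ erefl).
  apply: (IH _ _ _ H) => i; rewrite /lupd !ffunE; case: (i == j) => //; apply: Hle.
- move=> H Hle.
  apply: (IH _ _ _ H) => i; rewrite /lupd !ffunE; case: (i == j) => //; apply: Hle.
Qed.

Definition lreachP k (s t : lstate k) :=
  exists t', lreach s t' /\ Permutation t'.1 t.1 /\ t'.2 = t.2.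

Lemma lstep_perm k (s t u : lstate k) :
  lstep s u -> Permutation t.1 s.1 -> t.2 = s.2 -> lstep t u.
Proof.
move=> [[i [w [e [R [H1 [H2 [H3 H4]]]]]]]|[i [w [e [R [H1 [H2 H3]]]]]]] Hp He.
- left; exists i, w, e, R; rewrite He; split => //; exact: Ptrans Hp H1.
- right; exists i, w, e, R; rewrite He; split => //; exact: Ptrans Hp H1.
Qed.

Lemma lreach_perm k (s u : lstate k) :
  lreach s u -> forall t, Permutation t.1 s.1 -> t.2 = s.2 ->
  exists u', lreach t u' /\ Permutation u'.1 u.1 /\ u'.2 = u.2.
Proof.
elim => {s u}.
- move=> s u Hs t Hp He; exists u; split => //; apply: rt_step; exact: lstep_perm Hs Hp He.
- move=> s t Hp He; exists t; split => //; exact: rt_refl.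
- move=> x y z _ IH1 _ IH2 t Hp He.
  have [y' [Ry [Py Ey]]] := IH1 t Hp He.
  have [z' [Rz [Pz Ez]]] := IH2 y' Py Ey.
  exists z'; split => //; exact: rt_trans Ry Rz.
Qed.

Lemma lreachP_refl k (s : lstate k) : lreachP s s.
Proof. exists s; split => //; exact: rt_refl. Qed.

Lemma lreachP_trans k (s t u : lstate k) : lreachP s t -> lreachP t u -> lreachP s u.
Proof.
move=> [t' [R1 [P1 E1]]] [u' [R2 [P2 E2]]].
have [u'' [R3 [P3 E3]]] := lreach_perm R2 P1 E1.
exists u''; split; first exact: rt_trans R1 R3.
split; [exact: Ptrans P3 P2 | by rewrite E3].
Qed.

Lemma lreachP_perm k (P Q : lproc k) C :
  Permutation P Q -> lreachP (P, C) (Q, C).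
Proof. move=> H; exists (P, C); split => //; exact: rt_refl. Qed.

Lemma lreachP_step k (s t : lstate k) : lstep s t -> lreachP s t.
Proof. move=> H; exists t; split => //; exact: rt_step. Qed.

Lemma run_head k (C D : lconf k) w rest e Q :
  lrun C w = Some D -> lreachP ((w ++ rest, e) :: Q, C) ((rest, e) :: Q, D).
Proof.
elim: w C => [|a w IH] C /=; first by move=> [->]; exact: lreachP_refl.
case: a => j.
- case Cj: (C j) => // H.
  apply: lreachP_trans (IH _ H).
  apply: lreachP_step; left; exists j, (w ++ rest), e, Q; split => //.
- move=> H; apply: lreachP_trans (IH _ H).
  apply: lreachP_step; right; exists j, (w ++ rest), e, Q; split => //.
Qed.

Lemma perm_mid (T : Type) (l1 l2 : seq T) a :
  Permutation (l1 ++ a :: l2) (a :: l1 ++ l2).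
Proof.
elim: l1 => [|b l IH] /=; first exact: Permutation_refl.
apply: Ptrans Pswap; exact: Pskip.
Qed.

Definition stuck (r : lword 2) (C : lconf 2) :=
  r = [::] \/ exists i w, r = LP i :: w /\ C i = true.

Lemma sched (p rest : lword 2)
  (Hp : forall D : lconf 2, D l0 = false -> exists D', lrun D p = Some D' /\ D' l0 = true) :
  forall (r : lword 2) (C : lconf 2), C l0 = true -> exists (m : nat) (r' : lword 2) (C' : lconf 2), C' l0 = true /\ stuck r' C' /\
    forall k, lreachP ((r, false) :: nseq k (rest, true) ++ nseq m (p ++ rest, true), C)
                      ((r', false) :: nseq (k + m) (rest, true), C').
Proof.
elim => [|a r IH] C HC.
- exists 0, [::], C; split => //; split; first by left.
  move=> k; rewrite addn0 cats0; exact: lreachP_refl.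
- case: a => i.
  + case Ci: (C i).
    * exists 0, (LP i :: r), C; split => //; split; first by right; exists i, r.
      move=> k; rewrite addn0 cats0; exact: lreachP_refl.
    * have HC2 : (lupd C i true) l0 = true by rewrite /lupd ffunE; case: (l0 == i).
      have [m [r' [C' [H1 [H2 H3]]]]] := IH _ HC2.
      exists m, r', C'; split => //; split => // k.
      apply: lreachP_trans (H3 k).
      apply: lreachP_step; left; exists i, r, false, (nseq k (rest, true) ++ nseq m (p ++ rest, true)).
      by split.
  + case Ei: (i == l0).
    * move/eqP: Ei => Ei; subst i.
      have HC2 : (lupd C l0 false) l0 = false by rewrite /lupd ffunE eqxx.
      have [D [HD1 HD2]] := Hp _ HC2.
      have [m [r' [C' [H1 [H2 H3]]]]] := IH _ HD2.
      exists m.+1, r', C'; split => //; split => // k.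
      apply: (@lreachP_trans _ _ ((r, false) :: nseq k (rest, true) ++ nseq m.+1 (p ++ rest, true), lupd C l0 false)).
        apply: lreachP_step; right; exists l0, r, false, (nseq k (rest, true) ++ nseq m.+1 (p ++ rest, true)).
        by split.
      apply: lreachP_trans; first apply: lreachP_perm.
        exact: (perm_mid ((r, false) :: nseq k (rest, true)) (nseq m (p ++ rest, true)) (p ++ rest, true)).
      apply: lreachP_trans; first exact: run_head HD1.
      apply: lreachP_trans; first apply: lreachP_perm; first exact: Pswap.
      rewrite -addSnnS; exact: (H3 k.+1).
    * have HC2 : (lupd C i false) l0 = true by rewrite /lupd ffunE eq_sym Ei.
      have [m [r' [C' [H1 [H2 H3]]]]] := IH _ HC2.
      exists m, r', C'; split => //; split => // k.
      apply: lreachP_trans (H3 k).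
      apply: lreachP_step; right; exists i, r, false, (nseq k (rest, true) ++ nseq m (p ++ rest, true)).
      by split.
Qed.

Lemma In_nseq (T : Type) (x y : T) n : In x (nseq n y) -> x = y.
Proof. elim: n => [|n IH] //= [->|H] //; exact: IH. Qed.

Lemma dead (r : lword 2) (C : lconf 2) post n (P : lproc 2) :
  stuck r C -> C l0 = true ->
  Permutation P ((r, false) :: nseq n (LP l0 :: post, true)) ->
  (forall u, ~ lstep (P, C) u) /\ ~ lsuccessful (P, C).
Proof.
move=> Hs HC HP; split.
- move=> u [[i [w [e [R [H1 [H2 _]]]]]]|[i [w [e [R [H1 _]]]]]] /=.
  + have: In (LP i :: w, e) ((r, false) :: nseq n (LP l0 :: post, true)).
      eapply Permutation_in; [exact: HP|]; eapply Permutation_in; [exact: (Permutation_sym H1)|]; by left.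
    move=> [Heq|Hin].
    * case: Heq => Er _; subst r; case: Hs => [//|[j [w' [[<- _] Hj]]]].
      by rewrite /= Hj in H2.
    * move: (In_nseq Hin) => [Ei _ _]; subst i; by rewrite /= HC in H2.
  + have: In (LT i :: w, e) ((r, false) :: nseq n (LP l0 :: post, true)).
      eapply Permutation_in; [exact: HP|]; eapply Permutation_in; [exact: (Permutation_sym H1)|]; by left.
    move=> [Heq|Hin].
    * case: Heq => Er _; subst r; by case: Hs => [//|[j [w' [? _]]]].
    * by case: (In_nseq Hin).
- rewrite /lsuccessful /= => H.
  have := Permutation_in _ HP H; move=> [//|Hin].
  by case: (In_nseq Hin).
Qed.

Lemma noreach k (s t : lstate k) : lreach s t -> (forall u, ~ lstep s u) -> t = s.
Proof.
move=> Hr Hn; case: (clos_rt_rt1n _ _ _ _ Hr) => // y z Hs _; by exfalso; apply: (Hn y).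
Qed.

Definition srcP m : sproc := SRecv SZero :: nseq m.+1 (SSend SCheck).

Lemma smust_src m : smust (srcP m).
Proof.
pose Inv Q := Permutation Q (srcP m) \/ In SCheck Q.
have pres : forall Q Q', sreach Q Q' -> Inv Q -> Inv Q'.
  move=> Q Q'; elim => {Q Q'}.
  - move=> Q Q' [U1 [U2 [R [H1 H2]]]] [HQ|HQ]; right.
    + have : In (SSend U1) (srcP m).
        eapply Permutation_in; [exact: HQ|]; eapply Permutation_in; [exact: (Permutation_sym H1)|]; by left.
      move=> [//|Hin]; case: (In_nseq (Hin : In (SSend U1) (nseq m.+1 (SSend SCheck)))) => EU; subst U1.
      eapply Permutation_in; [exact: (Permutation_sym H2)|]; by left.
    + have := Permutation_in _ H1 HQ; move=> [//|[//|HR]].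
      eapply Permutation_in; [exact: (Permutation_sym H2)|]; by right; right.
  - by [].
  - move=> x y z _ IH1 _ IH2 H; exact: IH2 (IH1 H).
move=> Q HQ.
case: (pres _ _ HQ (or_introl (Permutation_refl _))) => [Hp|Hin].
- exists (SCheck :: SZero :: nseq m (SSend SCheck)); split; last by left.
  apply: rt_step; exists SCheck, SZero, (nseq m (SSend SCheck)); split => //.
  apply: Ptrans Hp _; exact: Pswap.
- exists Q; split => //; exact: rt_refl.
Qed.

Theorem lemma5p11 (IS : lconf 2) (ws wr : lword 2) :
  trans_btype IS ws wr (BPP (@ord0 1)) (BP (@ord_max 1)) ->
  ~ correct_translation IS ws wr.
Proof.
move=> [Hws Hwr] Hc.
have HIS1 : IS l1 = true.
  case: Hwr => [R [post [C [_ [Hm [HR HC]]]]]].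
  by rewrite -(lrun_nomention HR Hm).
case: Hws => [R1 [R2 [post [C0 [Ews [Hm2 [HC0 HC0l]]]]]]].
set p := R1 ++ LP (@ord0 1) :: R2.
set rest := LP l0 :: post.
have Ewp : ws = p ++ rest by rewrite Ews /p /rest -catA.
have Hp : forall D : lconf 2, D l0 = false -> exists D', lrun D p = Some D' /\ D' l0 = true.
  move=> D HD.
  have [D' HD'] : exists D', lrun D p = Some D'.
    apply: (lrun_mono HC0) => i; case: (I2_cases i) => ->; by rewrite ?HD ?HIS1.
  exists D'; split => //.
  move: HD'; rewrite /p lrun_cat; case: (lrun D R1) => [E|] //= .
  case: (E ord0) => // H.
  by rewrite (lrun_nomention H Hm2) /lupd ffunE eqxx.
have [m [r' [C' [H1 [H2 H3]]]]] := @sched p rest Hp (wr ++ [::]) C0 HC0l.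
have Hmust := proj1 (proj2 (Hc (srcP m))) (@smust_src m).
have Etr : trproc ws wr (srcP m) = (wr ++ [::], false) :: nseq m.+1 (p ++ rest, true).
  by rewrite /trproc /srcP /= map_nseq /= !cats0 -Ewp.
have Hreach : lreachP (trproc ws wr (srcP m), IS) ((r', false) :: nseq (1 + m) (rest, true), C').
  rewrite Etr.
  apply: lreachP_trans; first apply: lreachP_perm; first exact: Pswap.
  apply: lreachP_trans; first exact: run_head HC0.
  apply: lreachP_trans; first apply: lreachP_perm; first exact: Pswap.
  exact: (H3 1).
case: Hreach => [[P D] [HR [HP HD]]]; simpl in HP, HD; subst D.
have [Hnostep Hnsucc] := @dead r' C' post (1 + m) P H2 H1 HP.
have [s' [Hs' Hsucc]] := Hmust _ HR.
rewrite (noreach Hs' Hnostep) in Hsucc.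
exact: Hnsucc Hsucc.
Qed.
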